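(* Under Assumptions 1–4 below, the iterates of Algorithm 2Direction satisfy, for every $t\ge0$, with $s_t=\frac{\gamma_{t+1}}{\bar L+\Gamma_{t+1}\mu}$, $$\mathbb E_t\|w^{t+1}-u^{t+1}\|^2\le\Big(1-\frac\alpha2\Big)\|w^t-u^t\|^2+\frac4\alpha s_t^2\|k^t-\nabla f(z^t)\|^2+\frac{2\omega}{n}s_t^2\frac1n\sum_{i=1}^n\|\nabla f_i(z^t)-h_i^t\|^2+s_t^2\Big(\frac{4\omega L_{\max}}{n}+\frac{8L}{\alpha}\Big)D_f(z^t,y^{t+1}),$$ where $D_f(x,y)=f(x)-f(y)-\langle\nabla f(y),x-y\rangle$.
   Context: Setting: $f=\frac1n\sum_{i=1}^nf_i$, $f_i:\mathbb R^d\to\mathbb R$. Assumption 1: each $f_i$ is $L_i$-smooth, $L_{\max}=\max_iL_i$, and $\widehat L>0$ satisfies $\frac1n\sum_i\|\nabla f_i(x)-\nabla f_i(y)\|^2\le\widehat L^2\|x-y\|^2$ for all $x,y$. Assumption 2: $f$ is $L$-smooth. Assumption 3: each $f_i$ is convex and $f$ is $\mu$-strongly convex ($\mu\ge0$) with minimizer $x^*$. Assumption 4: the randomness of all compressors is drawn independently (of each other, of the coins $c^t$, and of the past). Compressor classes: $\mathbb U(\omega)$ ($\omega\ge0$) = stochastic maps $\mathcal C$ with $\mathbb E\mathcal C(x)=x$, $\mathbb E\|\mathcal C(x)-x\|^2\le\omega\|x\|^2$; $\mathbb B(\alpha)$ ($\alpha\in(0,1]$) = possibly stochastic maps with $\mathbb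 E\|\mathcal C(x)-x\|^2\le(1-\alpha)\|x\|^2$. Algorithm 2Direction: compressors $\mathcal C_i^{D,y},\mathcal C_i^{D,z}\in\mathbb U(\omega)$ (workers), $\mathcal C^P\in\mathbb B(\alpha)$ (server); parameters $\bar L>0$, $\mu\ge0$, $p\in(0,1]$, $\Gamma_0\ge1$, $\tau\in(0,1]$, $x^0,h_1^0,\dots,h_n^0,k^0,v^0\in\mathbb R^d$. Set $\beta=1/(\omega+1)$, $w^0=z^0=u^0=x^0$, $h^0=\frac1n\sum_ih_i^0$, $\theta_{\min}=\frac14\min\{1,\alpha/p,\tau/p,\beta/p\}$. For $t=0,1,\dots$: let $\bar\theta_{t+1}$ be the largest root of $p\bar L\Gamma_t\theta^2+p(\bar L+\Gamma_t\mu)\theta-(\bar L+\Gamma_t\mu)=0$, $\theta_{t+1}=\min\{\bar\theta_{t+1},\theta_{\min}\}$, $\gamma_{t+1}=p\theta_{t+1}\Gamma_t/(1-p\theta_{t+1})$, $\Gamma_{t+1}=\Gamma_t+\gamma_{t+1}$; $y^{t+1}=\theta_{t+1}w^t+(1-\theta_{t+1})z^t$; $m_i^{t,y}=\mathcal C_i^{D,y}(\nabla f_i(y^{t+1})-h_i^t)$; $g^{t+1}=h^t+\frac1n\sum_im_i^{t,y}$; $u^{t+1}=\arg\min_x\{\langle g^{t+1},x\rangle+\frac{\bar L+\Gamma_t\mu}{2\gamma_{t+1}}\|x-u^t\|^2+\frac\mu2\|x-y^{t+1}\|^2\}$; $q^{t+1}=\arg\min_x\{\langle k^t,x\rangle+\frac{\bar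 L+\Gamma_t\mu}{2\gamma_{t+1}}\|x-w^t\|^2+\frac\mu2\|x-y^{t+1}\|^2\}$; $w^{t+1}=q^{t+1}+\mathcal C^P(u^{t+1}-q^{t+1})$; $x^{t+1}=\theta_{t+1}u^{t+1}+(1-\theta_{t+1})z^t$; draw $c^t\sim\mathrm{Bernoulli}(p)$, and set $(k^{t+1},z^{t+1})=(v^t,x^{t+1})$ if $c^t=1$, $(k^{t+1},z^{t+1})=(k^t,z^t)$ if $c^t=0$; $m_i^{t,z}=\mathcal C_i^{D,z}(\nabla f_i(z^{t+1})-h_i^t)$; $h_i^{t+1}=h_i^t+\beta m_i^{t,z}$; $v^{t+1}=(1-\tau)v^t+\tau(h^t+\frac1n\sum_im_i^{t,z})$; $h^{t+1}=h^t+\frac\beta n\sum_im_i^{t,z}$. $\mathbb E_t$ denotes conditional expectation given the randomness of the first $t$ iterations. *)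

(* Defs.v *)
From mathcomp Require Import all_boot all_order all_algebra.
From mathcomp Require Import all_classical all_reals all_analysis.
Set Implicit Arguments. Unset Strict Implicit. Unset Printing Implicit Defensive.
Import Order.TTheory GRing.Theory Num.Theory.
Local Open Scope ring_scope.

Section Defs.
Variable R : realType.
Variable d : nat.
Notation vec := 'rV[R]_d.

Definition dot (u v : vec) : R := \sum_(j < d) u ord0 j * v ord0 j.
Definition sqn (v : vec) : R := dot v v.
Definition enorm (v : vec) : R := Num.sqrt (sqn v).

Definition bregman (f : vec -> R) (gf : vec -> vec) (x y : vec) : R :=
  f x - f y - dot (gf y) (x - y).

Definition is_argmin (F : vec -> R) (x : vec) : Prop := forall z, F x <= F z.

Definition smooth_grad (L : R) (gf : vec -> vec) : Prop :=
  forall x y, enorm (gf x - gf y) <= L * enorm (x - y).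

Definition is_gradient (f : vec -> R) (gf : vec -> vec) : Prop :=
  forall x, differentiable f x /\ forall h, 'd f x h = dot (gf x) h.

Definition convex_fun (f : vec -> R) : Prop :=
  forall (x y : vec) (a : R), 0 <= a <= 1 ->
    f (a *: x + (1 - a) *: y) <= a * f x + (1 - a) * f y.

Definition strongly_convex_fun (mu : R) (f : vec -> R) : Prop :=
  forall (x y : vec) (a : R), 0 <= a <= 1 ->
    f (a *: x + (1 - a) *: y)
      <= a * f x + (1 - a) * f y - mu / 2 * a * (1 - a) * sqn (x - y).

(* Deterministic step-size sequences of Algorithm 2Direction.
   thetabar G = largest root of  p Lbar G th^2 + p (Lbar + G mu) th - (Lbar + G mu) = 0 *)
Definition thetabar (Lbar mu p G : R) : R :=
  let a := p * Lbar * G in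
  let b := p * (Lbar + G * mu) in
  let c := Lbar + G * mu in
  (- b + Num.sqrt (b ^+ 2 + 4 * a * c)) / (2 * a).

Definition theta_min (p alpha tau beta : R) : R :=
  4^-1 * Num.min 1 (Num.min (alpha / p) (Num.min (tau / p) (beta / p))).

Definition theta_next (Lbar mu p alpha tau omega G : R) : R :=
  Num.min (thetabar Lbar mu p G) (theta_min p alpha tau (1 / (omega + 1))).

Definition gamma_next (Lbar mu p alpha tau omega G : R) : R :=
  let th := theta_next Lbar mu p alpha tau omega G in
  p * th * G / (1 - p * th).

Fixpoint Gam (Lbar mu p alpha tau omega G0 : R) (t : nat) : R :=
  match t with
  | 0 => G0
  | t'.+1 => let G := Gam Lbar mu p alpha tau omega G0 t' in
             G + gamma_next Lbar mu p alpha tau omega G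
  end.

End Defs.

(* Expectation w.r.t. k independent draws from the probability P:
   iterE P k F = \int P(dw_1) ... \int P(dw_k) F [:: w_1; ...; w_k]. *)
Fixpoint iterE (R : realType) (dT : measure_display) (T : measurableType dT)
  (P : probability T R) (k : nat) (F : seq T -> \bar R) : \bar R :=
  match k with
  | 0 => F [::]
  | k'.+1 => (\int[P]_w iterE P k' (fun s => F (w :: s)))%E
  end.

(* Main.v *)
Require Import Defs.
From mathcomp Require Import all_boot all_order all_algebra.
From mathcomp Require Import all_classical all_reals all_analysis.
From mathcomp Require Import ring lra.
Set Implicit Arguments. Unset Strict Implicit. Unset Printing Implicit Defensive.
Import Order.TTheory GRing.Theory Num.Theory.
Local Open Scope ring_scope.

Lemma dotC (R : realType) d (u v : 'rV[R]_d) : dot u v = dot v u.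
Proof. by apply: eq_bigr => j _; rewrite mulrC. Qed.

Lemma dotDl (R : realType) d (u v w : 'rV[R]_d) : dot (u + v) w = dot u w + dot v w.
Proof. by rewrite /dot -big_split; apply: eq_bigr => j _; rewrite !mxE mulrDl. Qed.

Lemma dotZl (R : realType) d c (u w : 'rV[R]_d) : dot (c *: u) w = c * dot u w.
Proof. by rewrite /dot mulr_sumr; apply: eq_bigr => j _; rewrite !mxE mulrA. Qed.

Lemma dotNl (R : realType) d (u w : 'rV[R]_d) : dot (- u) w = - dot u w.
Proof. by rewrite -scaleN1r dotZl mulN1r. Qed.

Lemma dotBl (R : realType) d (u v w : 'rV[R]_d) : dot (u - v) w = dot u w - dot v w.
Proof. by rewrite dotDl dotNl. Qed.

Lemma dotDr (R : realType) d (u v w : 'rV[R]_d) : dot w (u + v) = dot w u + dot w v.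
Proof. by rewrite dotC dotDl !(dotC w). Qed.

Lemma dotZr (R : realType) d c (u w : 'rV[R]_d) : dot w (c *: u) = c * dot w u.
Proof. by rewrite dotC dotZl dotC. Qed.

Lemma dotNr (R : realType) d (u w : 'rV[R]_d) : dot w (- u) = - dot w u.
Proof. by rewrite dotC dotNl dotC. Qed.

Lemma dotBr (R : realType) d (u v w : 'rV[R]_d) : dot w (u - v) = dot w u - dot w v.
Proof. by rewrite dotDr dotNr. Qed.

Lemma dot0l (R : realType) d (w : 'rV[R]_d) : dot 0 w = 0.
Proof. by rewrite /dot big1 // => j _; rewrite mxE mul0r. Qed.

Lemma dot0r (R : realType) d (w : 'rV[R]_d) : dot w 0 = 0.
Proof. by rewrite dotC dot0l. Qed.

Lemma dot_sumr (R : realType) d (I : finType) (F : I -> 'rV[R]_d) w :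
  dot w (\sum_i F i) = \sum_i dot w (F i).
Proof.
elim/big_rec2: _ => [|i y1 y2 _ <-]; first by rewrite dot0r.
by rewrite dotDr.
Qed.

Lemma dot_suml (R : realType) d (I : finType) (F : I -> 'rV[R]_d) w :
  dot (\sum_i F i) w = \sum_i dot (F i) w.
Proof. by rewrite dotC dot_sumr; apply: eq_bigr => i _; rewrite dotC. Qed.

Lemma sqn_ge0 (R : realType) d (v : 'rV[R]_d) : 0 <= sqn v.
Proof. by apply: sumr_ge0 => j _; rewrite -expr2 sqr_ge0. Qed.

Lemma sqn_eq0 (R : realType) d (v : 'rV[R]_d) : sqn v = 0 -> v = 0.
Proof.
move=> /eqP; rewrite /sqn /dot psumr_eq0; last by move=> j _; rewrite -expr2 sqr_ge0.
move=> /allP H; apply/rowP => j; rewrite mxE.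
have := H j (mem_index_enum j); rewrite /= -expr2 sqrf_eq0 => /eqP //.
Qed.

Lemma sqn_le0 (R : realType) d (v : 'rV[R]_d) : sqn v <= 0 -> v = 0.
Proof. by move=> H; apply: sqn_eq0; apply/eqP; rewrite eq_le H sqn_ge0. Qed.

Lemma sqnD (R : realType) d (u v : 'rV[R]_d) :
  sqn (u + v) = sqn u + 2 * dot u v + sqn v.
Proof. rewrite /sqn !dotDl !dotDr (dotC v u); ring. Qed.

Lemma sqnB (R : realType) d (u v : 'rV[R]_d) :
  sqn (u - v) = sqn u - 2 * dot u v + sqn v.
Proof. rewrite /sqn !dotDl !dotDr !dotNl !dotNr (dotC v u); ring. Qed.

Lemma sqnZ (R : realType) d c (u : 'rV[R]_d) : sqn (c *: u) = c ^+ 2 * sqn u.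
Proof. rewrite /sqn dotZl dotZr; ring. Qed.

Lemma sqnN (R : realType) d (u : 'rV[R]_d) : sqn (- u) = sqn u.
Proof. by rewrite /sqn dotNl dotNr opprK. Qed.

Lemma sqn_sym (R : realType) d (u v : 'rV[R]_d) : sqn (u - v) = sqn (v - u).
Proof. by rewrite -sqnN opprB. Qed.

Lemma young (R : realType) d e (u v : 'rV[R]_d) : 0 < e ->
  2 * dot u v <= e * sqn u + e^-1 * sqn v.
Proof.
move=> e0.
have := sqn_ge0 (e *: u - v); rewrite sqnB sqnZ dotZl => H.
have he : e * e^-1 = 1 by rewrite mulfV // gt_eqF.
have Hi : 0 < e^-1 by rewrite invr_gt0.
have : 0 <= e^-1 * (e ^+ 2 * sqn u - 2 * (e * dot u v) + sqn v) by rewrite mulr_ge0 // ltW.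
have -> : e^-1 * (e ^+ 2 * sqn u - 2 * (e * dot u v) + sqn v) =
   (e * e^-1) * (e * sqn u) - (e * e^-1) * (2 * dot u v) + e^-1 * sqn v by ring.
rewrite he !mul1r; lra.
Qed.

Lemma sqn_young (R : realType) d e (u v : 'rV[R]_d) : 0 < e ->
  sqn (u + v) <= (1 + e) * sqn u + (1 + e^-1) * sqn v.
Proof. move=> e0; have := young u v e0; rewrite sqnD; lra. Qed.

Lemma enorm_ge0 (R : realType) d (v : 'rV[R]_d) : 0 <= enorm v.
Proof. exact: sqrtr_ge0. Qed.

Lemma enorm_sqr (R : realType) d (v : 'rV[R]_d) : enorm v ^+ 2 = sqn v.
Proof. by rewrite /enorm sqr_sqrtr // sqn_ge0. Qed.

Lemma enorm_le_sqn (R : realType) d d' (a : 'rV[R]_d) (b : 'rV[R]_d') c :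
  enorm a <= c * enorm b -> sqn a <= c ^+ 2 * sqn b.
Proof.
move=> H; rewrite -!enorm_sqr -exprMn.
have h0 := enorm_ge0 a.
by rewrite ler_pXn2r // ?nnegrE // (le_trans h0 H).
Qed.

Lemma dot_le_of_sqn (R : realType) d (D h : 'rV[R]_d) c : 0 <= c ->
  sqn D <= c ^+ 2 * sqn h -> dot D h <= c * sqn h.
Proof.
move=> c0 H; have [c00|cpos] := eqVneq c 0.
  move: H; rewrite c00 expr0n /= ?mul0r ?mul0n; move=> /sqn_le0 ->; rewrite dot0l; lra.
have cp : 0 < c by rewrite lt_def cpos c0.
have := young (e := c^-1) D h; rewrite invrK invr_gt0 => /(_ cp) Y.
have : c^-1 * sqn D <= c^-1 * (c ^+ 2 * sqn h) by rewrite ler_wpM2l // invr_ge0.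
have -> : c^-1 * (c ^+ 2 * sqn h) = (c^-1 * c) * (c * sqn h) by ring.
rewrite mulVf // mul1r; lra.
Qed.

Definition lined (R : realType) d (phi : 'rV[R]_d -> R) (g : 'rV[R]_d -> 'rV[R]_d) :=
  forall x h (t : R), is_derive t (1:R) (fun s : R => phi (x + s *: h)) (dot (g (x + t *: h)) h).

Lemma lined_grad (R : realType) d (phi : 'rV[R]_d -> R) g :
  is_gradient phi g -> lined phi g.
Proof.
move=> Hg x h t.
have [dif dd] := Hg (x + t *: h).
have E : (fun s : R => s^-1 *: (((fun s0 : R => phi (x + s0 *: h)) \o shift t) (s *: (1:R))
              - phi (x + t *: h))) =
         (fun s : R => s^-1 *: ((phi \o shift (x + t *: h)) (s *: h) - phi (x + t *: h))).
  apply: funext => s /=; congr (_ *: (phi _ - _)).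
  rewrite /shift /= scalerDl. set e := (X in x + (X *: h + _)). have -> : e = s by rewrite /e; apply: mulr1.
  by rewrite addrCA.
have Hd : derivable phi (x + t *: h) h by exact: diff_derivable.
apply: DeriveDef.
  by rewrite /derivable E.
by rewrite /derive E -/(derive phi (x + t *: h) h) deriveE // dd.
Qed.

Lemma is_derive_lin (R : realType) (t c : R) : is_derive t (1:R) (fun s : R => s * c) c.
Proof.
have H := @is_deriveZ R R^o R^o id c t 1 1 (is_derive_id _ _).
have -> : (fun s : R => s * c) = c \*: (id : R^o -> R^o).
  by apply: funext => s /=; rewrite mulrC.
by apply: is_derive_eq H _; exact: mulr1.
Qed.

Lemma is_derive_sq (R : realType) (t a : R) :
  is_derive t (1:R) (fun s : R => a * s ^+ 2) (a * (2 * t)).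
Proof.
have H0 := @is_deriveX R R^o id 2 t 1 1 (is_derive_id _ _).
have H := @is_deriveZ R R^o R^o _ a t 1 _ H0.
have -> : (fun s : R => a * s ^+ 2) = a \*: ((id : R^o -> R^o) ^+ 2).
  by apply: funext => s /=.
apply: is_derive_eq H _; rewrite [X in a *: X](_ : _ = 2 * t); first by []. by rewrite -[RHS]mulr1.
Qed.

Lemma descent_up (R : realType) d (phi : 'rV[R]_d -> R) g K x h :
  lined phi g -> smooth_grad K g -> 0 <= K ->
  phi (x + h) - phi x - dot (g x) h <= K / 2 * sqn h.
Proof.
move=> Hl Hs K0.
pose c := dot (g x) h.
pose r := fun s : R => phi (x + s *: h) - (s * c + (K / 2 * sqn h) * s ^+ 2).
have Dr : forall t, is_derive t (1:R) r (dot (g (x + t *: h)) h - (c + (K / 2 * sqn h) * (2 * t))).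
  move=> t; rewrite /r.
  have H1 := Hl x h t.
  have H2 := is_deriveD (is_derive_lin t c) (is_derive_sq t (K / 2 * sqn h)).
  have H3 := is_deriveB H1 H2.
  exact: H3.
have der : forall t, derivable r t 1 by move=> t; have := Dr t; case.
have neg : forall t, t \in `]0, 1[%R -> derive1 r t <= 0.
  move=> t; rewrite in_itv /= => /andP [t0 t1].
  rewrite derive1E; have [_ ->] := Dr t.
  have Hsm := Hs (x + t *: h) x.
  rewrite addrAC subrr add0r in Hsm.
  have Hsq := enorm_le_sqn Hsm; rewrite sqnZ in Hsq.
  have Hd := @dot_le_of_sqn _ _ (g (x + t *: h) - g x) h (K * t) (mulr_ge0 K0 (ltW t0)).
  have Hsq' : sqn (g (x + t *: h) - g x) <= (K * t) ^+ 2 * sqn h.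
    by rewrite exprMn -mulrA.
  have := Hd Hsq'; rewrite dotBl /c => HH.
  have -> : K / 2 * sqn h * (2 * t) = K * t * sqn h by field.
  lra.
have := ler0_derive1_nincr (fun t _ => der t) neg (derivable_within_continuous (i := `[0, 1]%R) (fun t _ => der t)) (lexx 0) ler01 (lexx 1).
rewrite /r scale1r scale0r addr0 !mul1r mul0r expr1n expr0n /= mulr0 addr0 mulr1 /c.
lra.
Qed.

Lemma descent_low (R : realType) d (phi : 'rV[R]_d -> R) g K x h :
  lined phi g -> smooth_grad K g -> 0 <= K ->
  - (K / 2 * sqn h) <= phi (x + h) - phi x - dot (g x) h.
Proof.
move=> Hl Hs K0.
have Hl' : lined (fun x => - phi x) (fun x => - g x).
  move=> y k t; have := is_deriveN (Hl y k t); rewrite -dotNl; exact.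
have Hs' : smooth_grad K (fun x => - g x).
  move=> a b; have := Hs a b.
  by rewrite /enorm -opprD sqnN.
have := descent_up x h Hl' Hs' K0; rewrite dotNl; lra.
Qed.

Lemma smooth_max (R : realType) d (g : 'rV[R]_d -> 'rV[R]_d) K :
  smooth_grad K g -> smooth_grad (Num.max K 0) g.
Proof.
move=> Hs a b; apply: (le_trans (Hs a b)); apply: ler_wpM2r; first exact: enorm_ge0.
by rewrite le_max lexx.
Qed.

Lemma first_order (R : realType) d (phi : 'rV[R]_d -> R) g K y z :
  convex_fun phi -> lined phi g -> smooth_grad K g ->
  0 <= phi z - phi y - dot (g y) (z - y).
Proof.
move=> Hc Hl Hs0.
have Hs := smooth_max Hs0; set K' := Num.max K 0 in Hs.
have K0 : 0 <= K' by rewrite le_max lexx orbT.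
set D := phi z - phi y - dot (g y) (z - y).
set S := sqn (z - y).
have S0 : 0 <= S by exact: sqn_ge0.
have key : forall t, 0 < t <= 1 -> - (K' * t * S) / 2 <= D.
  move=> t /andP [t0 t1].
  have H1 := descent_low y (t *: (z - y)) Hl Hs K0.
  have H2 := Hc z y t; rewrite (ltW t0) t1 /= in H2.
  have E : y + t *: (z - y) = t *: z + (1 - t) *: y.
    by rewrite scalerBr scalerBl scale1r addrCA addrA.
  rewrite E sqnZ dotZr in H1.
  have H3 : - (K' / 2 * (t ^+ 2 * S)) <= t * D.
    rewrite -/S in H1; have H2' := H2 isT.
    rewrite /D !mulrBr; move: H1 H2'; set a := phi (_ + _); lra.
  have H4 : t * (- (K' * t * S) / 2) <= t * D.
    by apply: le_trans H3; rewrite le_eqVlt; apply/orP; left; apply/eqP; ring.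
  by rewrite ler_pM2l in H4.
rewrite leNgt; apply/negP => Dneg.
set M := K' * S - D.
have M0 : 0 < M by rewrite /M; have := mulr_ge0 K0 S0; lra.
have t0 : 0 < - D / M by rewrite divr_gt0 // oppr_gt0.
have t1 : - D / M <= 1 by rewrite ler_pdivrMr // mul1r /M; have := mulr_ge0 K0 S0; lra.
have := key (- D / M); rewrite t0 t1 => /(_ isT).
have -> : - (K' * (- D / M) * S) / 2 = (K' * S * D) / (2 * M).
  by field; rewrite gt_eqF.
rewrite ler_pdivrMr ?mulr_gt0 // /M => HH.
have KS := mulr_ge0 K0 S0.
nra.
Qed.

Lemma cocoercive (R : realType) d (phi : 'rV[R]_d -> R) g K y z :
  convex_fun phi -> lined phi g -> smooth_grad K g ->
  sqn (g z - g y) <= 2 * K * (phi z - phi y - dot (g y) (z - y)).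
Proof.
move=> Hc Hl Hs.
have [Kpos|Kle] := ltrP 0 K; last first.
  have H := Hs z y.
  have HK : K * enorm (z - y) <= 0 by rewrite mulr_le0_ge0 // enorm_ge0.
  have H0 : enorm (g z - g y) <= 0 by apply: le_trans H HK.
  have S0 : sqn (g z - g y) = 0.
    by apply/eqP; rewrite eq_le sqn_ge0 andbT -enorm_sqr expr2 mulr_le0_ge0 // enorm_ge0.
  rewrite S0.
  have [->|Kneg] := eqVneq K 0; first by rewrite mulr0 mul0r.
  have Kn : K < 0 by rewrite lt_neqAle Kneg Kle.
  have Ezy : enorm (z - y) <= 0.
    have := enorm_ge0 (g z - g y); have := enorm_ge0 (z - y); nra.
  have : sqn (z - y) <= 0 by rewrite -enorm_sqr expr2 mulr_le0_ge0 // enorm_ge0.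
  move=> /sqn_le0 /eqP; rewrite subr_eq0 => /eqP ->.
  by rewrite !subrr dot0r subrr mulr0.
set V := g z - g y; set S := sqn V.
set hv := - (K^-1 *: V).
have H1 := descent_up z hv Hl Hs (ltW Kpos).
have H2 := first_order y (z + hv) Hc Hl Hs.
have E1 : z + hv - y = (z - y) + hv by rewrite addrAC.
rewrite E1 dotDr in H2.
have E2 : dot (g z) hv = dot (g y) hv - K^-1 * S.
  have : dot V hv = - (K^-1 * S) by rewrite /hv dotNr dotZr.
  rewrite /V dotBl; lra.
have E3 : sqn hv = K^-2 * S by rewrite /hv sqnN sqnZ exprVn.
rewrite E2 E3 in H1.
have E4 : K / 2 * (K^-2 * S) = K^-1 * S / 2.
  by field; rewrite gt_eqF.
rewrite E4 in H1.
have Hk : K^-1 * S / 2 <= phi z - phi y - dot (g y) (z - y) by lra.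
have -> : S = 2 * K * (K^-1 * S / 2) by field; rewrite gt_eqF.
by apply: ler_wpM2l => //; rewrite mulr_ge0 // ltW.
Qed.

Lemma lined_avg (R : realType) d n (f : 'I_n -> 'rV[R]_d -> R) gf :
  (forall i, lined (f i) (gf i)) ->
  lined (fun x => n%:R^-1 * \sum_(i < n) f i x) (fun x => n%:R^-1 *: \sum_(i < n) gf i x).
Proof.
move=> Hl x h t.
have H := @is_deriveZ R R^o R^o _ n%:R^-1 t 1 _
  (@is_derive_sum R R^o R^o n (fun i s => f i (x + s *: h)) t 1 _ (fun i => Hl i x h t)).
have -> : (fun s : R => n%:R^-1 * \sum_(i < n) f i (x + s *: h)) =
   n%:R^-1 \*: (\sum_(i < n) (fun s : R^o => f i (x + s *: h)) : R^o -> R^o).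
  by apply: funext => s /=; rewrite fct_sumE.
apply: is_derive_eq H _.
by rewrite dotZl dot_suml.
Qed.

Lemma sconvex_convex (R : realType) d mu (F : 'rV[R]_d -> R) :
  0 <= mu -> strongly_convex_fun mu F -> convex_fun F.
Proof.
move=> mu0 Hs x y a Ha; apply: le_trans (Hs x y a Ha) _.
case/andP: Ha => a0 a1.
have : 0 <= mu / 2 * a * (1 - a) * sqn (x - y).
  by rewrite !mulr_ge0 // ?subr_ge0 // ?sqn_ge0 // divr_ge0.
lra.
Qed.

Lemma le_integral_nn (R : realType) (dT : measure_display) (T : measurableType dT)
  (P : probability T R) (f g : T -> \bar R) :
  (forall x, (0 <= f x)%E) -> (forall x, (f x <= g x)%E) ->
  (\int[P]_x f x <= \int[P]_x g x)%E.
Proof.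
move=> f0 fg.
have g0 : forall x, (0 <= g x)%E by move=> x; apply: le_trans (f0 x) (fg x).
rewrite (ge0_integralTE P f0) (ge0_integralTE P g0) /=.
apply: ereal_sup_le => _ [h hf <-]; exists h => //= x.
exact: le_trans (hf x) (fg x).
Qed.

Lemma iterE_ge0 (R : realType) (dT : measure_display) (T : measurableType dT)
  (P : probability T R) k (F : seq T -> \bar R) :
  (forall s, (0 <= F s)%E) -> (0 <= iterE P k F)%E.
Proof.
elim: k F => [|k IH] F F0 /=; first exact: F0.
by apply: integral_ge0 => w _; apply: IH => s; apply: F0.
Qed.

Lemma iterE_le (R : realType) (dT : measure_display) (T : measurableType dT)
  (P : probability T R) k (F1 F2 : seq T -> \bar R) :
  (forall s, (0 <= F1 s)%E) -> (forall s, (F1 s <= F2 s)%E) ->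
  (iterE P k F1 <= iterE P k F2)%E.
Proof.
elim: k F1 F2 => [|k IH] F1 F2 F0 F12 /=; first exact: F12.
apply: le_integral_nn.
  by move=> w; apply: iterE_ge0 => s; apply: F0.
by move=> w; apply: IH => s; [apply: F0|apply: F12].
Qed.

Lemma meas_coord (R : realType) (dT : measure_display) (T : measurableType dT)
  (P : probability T R) d (Y : T -> 'rV[R]_d) (j : 'I_d) :
  P.-integrable setT (fun w => (Y w ord0 j)%:E) ->
  measurable_fun setT (fun w => Y w ord0 j).
Proof. by move=> /(measurable_int P) /measurable_realfun.measurable_EFinP. Qed.

Lemma meas_sqn (R : realType) (dT : measure_display) (T : measurableType dT)
  (P : probability T R) d (Y : T -> 'rV[R]_d) :
  (forall j, P.-integrable setT (fun w => (Y w ord0 j)%:E)) ->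
  measurable_fun setT (fun w => sqn (Y w)).
Proof.
move=> HY; rewrite /sqn /dot.
apply: measurable_sum => j.
exact: measurable_realfun.measurable_funM (meas_coord (HY j)) (meas_coord (HY j)).
Qed.

Lemma int_lin (R : realType) (dT : measure_display) (T : measurableType dT)
  (P : probability T R) d (Y : T -> 'rV[R]_d) (v : 'rV[R]_d) :
  (forall j, P.-integrable setT (fun w => (Y w ord0 j)%:E)) ->
  (forall j, (\int[P]_w (Y w ord0 j)%:E = 0)%E) ->
  P.-integrable setT (fun w => (dot v (Y w))%:E) /\
  (\int[P]_w (dot v (Y w))%:E = 0)%E.
Proof.
move=> HI H0.
have E : (fun w => (dot v (Y w))%:E) =
         (fun w => \sum_(j <- index_enum 'I_d) (v ord0 j)%:E * (Y w ord0 j)%:E)%E.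
  by apply: funext => w; rewrite /dot -sumEFin; apply: eq_bigr => j _; rewrite EFinM.
have Hi : forall j : 'I_d, P.-integrable setT (fun w => ((v ord0 j)%:E * (Y w ord0 j)%:E)%E).
  by move=> j; apply: integrableZl => //; exact: HI.
rewrite E; split.
  by apply: (integrable_sum measurableT) => j _; exact: Hi.
rewrite (integral_sum measurableT Hi).
apply: big1 => j _; rewrite integralZl // ?H0 ?mule0 //.
Qed.

Lemma var_step (R : realType) (dT : measure_display) (T : measurableType dT)
  (P : probability T R) d (Y : T -> 'rV[R]_d) (v : 'rV[R]_d) (c B b : R) :
  0 <= c ->
  (forall j, P.-integrable setT (fun w => (Y w ord0 j)%:E)) ->
  (forall j, (\int[P]_w (Y w ord0 j)%:E = 0)%E) ->
  (\int[P]_w (sqn (Y w))%:E <= b%:E)%E ->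
  (\int[P]_w (c * (sqn (v + Y w) + B))%:E <= (c * (sqn v + b + B))%:E)%E.
Proof.
move=> c0 HI H0 Hb.
have [Il Zl] := int_lin v HI H0.
have ms := meas_sqn HI.
have IZ : (\int[P]_w (c * sqn (Y w))%:E = c%:E * \int[P]_w (sqn (Y w))%:E)%E.
  under eq_integral do rewrite EFinM.
  apply: ge0_integralZl_EFin => //.
    by move=> w _; rewrite lee_fin sqn_ge0.
  exact/measurable_realfun.measurable_EFinP.
have Isq : P.-integrable setT (fun w => (c * sqn (Y w))%:E).
  apply/integrableP; split.
    apply/measurable_realfun.measurable_EFinP.
    exact: measurable_realfun.measurable_funM (measurable_cst _) ms.
  under eq_integral do rewrite abse_EFin ger0_norm ?mulr_ge0 ?sqn_ge0 //.
  rewrite IZ (le_lt_trans (lee_wpmul2l _ Hb)) ?lee_fin // -EFinM; exact: ltey.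
have I2 : P.-integrable setT (fun w => ((2 * c)%:E * (dot v (Y w))%:E)%E).
  exact: integrableZl.
have E : (fun w => (c * (sqn (v + Y w) + B))%:E) =
   (fun w => (c * (sqn v + B))%:E + (((2 * c)%:E * (dot v (Y w))%:E) + (c * sqn (Y w))%:E))%E.
  apply: funext => w; rewrite sqnD -EFinM -!EFinD; congr EFin; ring.
rewrite E integralD //; last first.
  exact: integrableD.
  exact: (finite_measure_integrable_cst P (c * (sqn v + B)) measurableT).
rewrite integralD // integralZl // Zl mule0 add0e IZ.
have -> : (\int[P]_w (c * (sqn v + B))%:E = (c * (sqn v + B))%:E)%E.
  rewrite (integral_cst P measurableT) -[RHS]mule1; congr (_ * _)%E; exact: probability_setT.
apply: le_trans (leeD2l _ (lee_wpmul2l _ Hb)) _; first by rewrite lee_fin.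
by rewrite -EFinM -EFinD lee_fin le_eqVlt; apply/orP; left; apply/eqP; ring.
Qed.

Lemma iterE_var (R : realType) (dT : measure_display) (T : measurableType dT)
  (P : probability T R) d (c : R) : 0 <= c ->
  forall m (Z : nat -> T -> 'rV[R]_d) (b : nat -> R),
  (forall i j, P.-integrable setT (fun w => (Z i w ord0 j)%:E)) ->
  (forall i j, (\int[P]_w (Z i w ord0 j)%:E = 0)%E) ->
  (forall i, (\int[P]_w (sqn (Z i w))%:E <= (b i)%:E)%E) ->
  forall v, (iterE P m (fun s => (c * sqn (v + \sum_(i < m) Z i (nth point s i)))%:E)
     <= (c * (sqn v + \sum_(i < m) b i))%:E)%E.
Proof.
move=> c0; elim=> [|m IH] Z b HI H0 Hb v /=.
  by rewrite !big_ord0 addr0 addr0.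
apply: le_trans (_ : (\int[P]_w (c * (sqn (v + Z 0%N w) + \sum_(i < m) b i.+1))%:E <= _)%E).
  apply: le_integral_nn => w.
    by apply: iterE_ge0 => s; rewrite lee_fin mulr_ge0 // sqn_ge0.
  have := IH (fun i => Z i.+1) (fun i => b i.+1) (fun i => HI i.+1) (fun i => H0 i.+1)
     (fun i => Hb i.+1) (v + Z 0%N w).
  congr (_ <= _)%E; congr iterE; apply: funext => s.
  rewrite big_ord_recl addrA /=; congr (_ * sqn (_ + _))%:E.
apply: le_trans (@var_step _ _ _ P _ _ v c (\sum_(i < m) b i.+1) (b 0%N) c0 (HI 0%N) (H0 0%N) (Hb 0%N)) _.
by rewrite big_ord_recl addrA.
Qed.

Lemma argmin_char (R : realType) d (gv a b x0 : 'rV[R]_d) (c1 c2 : R) :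
  0 < c1 -> 0 <= c2 ->
  is_argmin (fun x => dot gv x + c1 * sqn (x - a) + c2 * sqn (x - b)) x0 ->
  gv + (2 * c1) *: (x0 - a) + (2 * c2) *: (x0 - b) = 0.
Proof.
move=> c1p c2p Hm.
set S := gv + (2 * c1) *: (x0 - a) + (2 * c2) *: (x0 - b).
set K := c1 + c2.
have Kp : 0 < K by rewrite /K; lra.
set t := (2 * K)^-1.
have tp : 0 < t by rewrite /t invr_gt0; lra.
set e := - (t *: S).
have H := Hm (x0 + e).
have E1 : x0 + e - a = (x0 - a) + e by rewrite addrAC.
have E2 : x0 + e - b = (x0 - b) + e by rewrite addrAC.
rewrite E1 E2 (sqnD (x0 - a)) (sqnD (x0 - b)) dotDr in H.
have HS : dot S e = dot gv e + 2 * c1 * dot (x0 - a) e + 2 * c2 * dot (x0 - b) e.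
  by rewrite /S dotDl dotDl !dotZl.
have HSe : dot S e = - t * sqn S by rewrite /e dotNr dotZr /sqn mulNr.
have Hee : sqn e = t ^+ 2 * sqn S by rewrite /e sqnN sqnZ.
have key : 0 <= dot S e + K * sqn e.
  rewrite HS /K; lra.
rewrite HSe Hee in key.
have Et : - t * sqn S + K * (t ^+ 2 * sqn S) = - (t / 2) * sqn S.
  rewrite /t; field; lra.
rewrite Et in key.
apply: sqn_le0.
have t2 : 0 < t / 2 by rewrite divr_gt0.
nra.
Qed.

Lemma theta_props (R : realType) (Lbar mu p alpha tau omega G : R) :
  0 < Lbar -> 0 <= mu -> 0 < p <= 1 -> 0 < alpha -> 0 < tau -> 0 <= omega -> 0 < G ->
  0 < theta_next Lbar mu p alpha tau omega G /\ theta_next Lbar mu p alpha tau omega G <= 4^-1.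
Proof.
move=> HL Hmu /andP [p0 p1] a0 t0 o0 G0.
have tmin0 : 0 < theta_min p alpha tau (1 / (omega + 1)).
  rewrite /theta_min; apply: mulr_gt0; first by rewrite invr_gt0.
  rewrite !lt_min ltr01 /= !divr_gt0 //; lra.
have tmin1 : theta_min p alpha tau (1 / (omega + 1)) <= 4^-1.
  rewrite /theta_min; apply: (@le_trans _ _ (4^-1 * 1)); last by rewrite mulr1.
  by apply: ler_wpM2l; [rewrite invr_ge0 | rewrite ge_min lexx].
have tb0 : 0 < thetabar Lbar mu p G.
  rewrite /thetabar /=.
  set b := p * (Lbar + G * mu).
  have b0 : 0 < b by rewrite /b mulr_gt0 //; have := mulr_ge0 (ltW G0) Hmu; lra.
  have ac : 0 < 4 * (p * Lbar * G) * (Lbar + G * mu).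
    by rewrite !mulr_gt0 //; have := mulr_ge0 (ltW G0) Hmu; lra.
  apply: divr_gt0; last by rewrite !mulr_gt0 //; lra.
  have : Num.sqrt (b ^+ 2) < Num.sqrt (b ^+ 2 + 4 * (p * Lbar * G) * (Lbar + G * mu)).
    rewrite ltr_sqrt; first lra.
    have := exprn_gt0 2 b0; lra.
  rewrite sqrtr_sqr ger0_norm ?ltW //.
  lra.
rewrite /theta_next; split.
  by rewrite lt_min tb0 tmin0.
by apply: le_trans tmin1; rewrite ge_min lexx orbT.
Qed.

Lemma gamma_pos (R : realType) (Lbar mu p alpha tau omega G : R) :
  0 < Lbar -> 0 <= mu -> 0 < p <= 1 -> 0 < alpha -> 0 < tau -> 0 <= omega -> 0 < G ->
  0 < gamma_next Lbar mu p alpha tau omega G.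
Proof.
move=> HL Hmu Hp a0 t0 o0 G0.
have [th0 th1] := theta_props HL Hmu Hp a0 t0 o0 G0.
case/andP: Hp => p0 p1.
rewrite /gamma_next /=; apply: divr_gt0; first by rewrite !mulr_gt0.
have : p * theta_next Lbar mu p alpha tau omega G <= 4^-1.
  apply: le_trans (_ : 1 * 4^-1 <= _); last by rewrite mul1r.
  by apply: ler_pM => //; exact: ltW.
have : (4^-1 : R) < 1 by rewrite invf_lt1 //; lra.
lra.
Qed.

Lemma Gam_ge1 (R : realType) (Lbar mu p alpha tau omega G0 : R) :
  0 < Lbar -> 0 <= mu -> 0 < p <= 1 -> 0 < alpha -> 0 < tau -> 0 <= omega -> 1 <= G0 ->
  forall t, 1 <= Gam Lbar mu p alpha tau omega G0 t.
Proof.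
move=> HL Hmu Hp a0 t0 o0 G1; elim=> [|t IH] //=.
have := gamma_pos HL Hmu Hp a0 t0 o0 (lt_le_trans ltr01 IH); lra.
Qed.

Lemma final_ineq (R : realType) (al cc st om nn Lmax L Suw SV T K DF Sx Sh Tg : R) :
  0 < al <= 1 -> 0 <= cc <= 1 -> 0 <= om -> 0 < nn ->
  0 <= Suw -> 0 <= T -> 0 <= Sx -> 0 <= Tg ->
  SV <= (1 + al / 2) * cc ^+ 2 * Suw + (1 + (al / 2)^-1) * st ^+ 2 * T ->
  T <= 2 * K + 2 * Tg -> Tg <= 2 * L * DF ->
  Sx <= 2 * Sh + 4 * Lmax * (nn * DF) ->
  (1 - al) * (SV + (st / nn) ^+ 2 * om * Sx) <=
  (1 - al / 2) * Suw + 4 / al * st ^+ 2 * K + 2 * om / nn * st ^+ 2 * (nn^-1 * Sh)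
  + st ^+ 2 * (4 * om * Lmax / nn + 8 * L / al) * DF.
Proof.
move=> /andP [a0 a1] /andP [c0 c1] o0 n0 Suw0 T0 Sx0 Tg0 HSV HT HTg HSx.
have st2 : 0 <= st ^+ 2 by exact: sqr_ge0.
have ia : (al / 2)^-1 = 2 / al by rewrite invf_div.
rewrite ia in HSV.
have a1' : 0 <= 1 - al by lra.
have c2 : cc ^+ 2 <= 1 by rewrite expr_le1.
have P1a : (1 - al) * ((1 + al / 2) * cc ^+ 2 * Suw) <= (1 - al / 2) * Suw.
  have h1 : (1 - al) * (1 + al / 2) <= 1 - al / 2 by nra.
  have h2 : 0 <= (1 - al) * (1 + al / 2) by apply: mulr_ge0 => //; lra.
  have h3 : (1 - al) * (1 + al / 2) * cc ^+ 2 <= 1 - al / 2.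
    apply: le_trans h1; rewrite -[X in _ <= X]mulr1; exact: ler_wpM2l.
  have := ler_wpM2r Suw0 h3.
  have -> : (1 - al) * ((1 + al / 2) * cc ^+ 2 * Suw) = (1 - al) * (1 + al / 2) * cc ^+ 2 * Suw by ring.
  done.
have P1b : (1 - al) * ((1 + 2 / al) * st ^+ 2 * T) <= 2 / al * st ^+ 2 * T.
  have h : (1 - al) * (1 + 2 / al) <= 2 / al.
    have -> : (1 - al) * (1 + 2 / al) = 2 / al - 1 - al by field; lra.
    lra.
  have := ler_wpM2r (mulr_ge0 st2 T0) h.
  have -> : (1 - al) * ((1 + 2 / al) * st ^+ 2 * T) = (1 - al) * (1 + 2 / al) * (st ^+ 2 * T) by ring.
  have -> : 2 / al * st ^+ 2 * T = 2 / al * (st ^+ 2 * T) by ring.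
  done.
have P1c : 2 / al * st ^+ 2 * T <= 4 / al * st ^+ 2 * K + st ^+ 2 * (8 * L / al) * DF.
  have hai : 0 <= 2 / al * st ^+ 2 by rewrite mulr_ge0 // divr_ge0 // ltW.
  have : 2 / al * st ^+ 2 * T <= 2 / al * st ^+ 2 * (2 * K + 4 * L * DF).
    by apply: ler_wpM2l => //; lra.
  move=> H; apply: le_trans H _; rewrite le_eqVlt; apply/orP; left; apply/eqP; field; lra.
have hb : 0 <= (st / nn) ^+ 2 * om by rewrite mulr_ge0 // sqr_ge0.
have P2 : (1 - al) * ((st / nn) ^+ 2 * om * Sx) <=
   2 * om / nn * st ^+ 2 * (nn^-1 * Sh) + st ^+ 2 * (4 * om * Lmax / nn) * DF.
  have : (1 - al) * ((st / nn) ^+ 2 * om * Sx) <= (st / nn) ^+ 2 * om * Sx.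
    have := mulr_ge0 hb Sx0; nra.
  move=> H; apply: le_trans H _.
  have : (st / nn) ^+ 2 * om * Sx <= (st / nn) ^+ 2 * om * (2 * Sh + 4 * Lmax * (nn * DF)).
    exact: ler_wpM2l.
  move=> H; apply: le_trans H _; rewrite le_eqVlt; apply/orP; left; apply/eqP; field; lra.
have : (1 - al) * (SV + (st / nn) ^+ 2 * om * Sx) =
  (1 - al) * SV + (1 - al) * ((st / nn) ^+ 2 * om * Sx) by ring.
move=> ->.
have P1 : (1 - al) * SV <= (1 - al) * ((1 + al / 2) * cc ^+ 2 * Suw) + (1 - al) * ((1 + 2 / al) * st ^+ 2 * T).
  by rewrite -mulrDr; apply: ler_wpM2l.
have : st ^+ 2 * (4 * om * Lmax / nn + 8 * L / al) * DF =
   st ^+ 2 * (4 * om * Lmax / nn) * DF + st ^+ 2 * (8 * L / al) * DF by ring.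
move=> ->.
lra.
Qed.

Lemma centered (R : realType) (dT : measure_display) (T : measurableType dT)
  (P : probability T R) d (C : T -> 'rV[R]_d) (x : 'rV[R]_d) (a om : R) :
  (forall j, P.-integrable setT (fun w => (C w ord0 j)%:E) /\
     (\int[P]_w (C w ord0 j)%:E = (x ord0 j)%:E)%E) ->
  (\int[P]_w (sqn (C w - x))%:E <= (om * sqn x)%:E)%E ->
  (forall j, P.-integrable setT (fun w => ((a *: (C w - x)) ord0 j)%:E)) /\
  (forall j, (\int[P]_w ((a *: (C w - x)) ord0 j)%:E = 0)%E) /\
  (\int[P]_w (sqn (a *: (C w - x)))%:E <= (a ^+ 2 * om * sqn x)%:E)%E.
Proof.
move=> HC Hv.
have Icst : forall k : R, P.-integrable setT (fun w => k%:E).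
  by move=> k; exact: (finite_measure_integrable_cst P k measurableT).
have ID : forall j, P.-integrable setT (fun w => ((C w - x) ord0 j)%:E).
  move=> j.
  have -> : (fun w => ((C w - x) ord0 j)%:E) =
            ((fun w => (C w ord0 j)%:E) \- (fun w => (x ord0 j)%:E))%E.
    by apply: funext => w; rewrite !mxE EFinB.
  exact: integrableB (HC j).1 (Icst _).
have IZ : forall j, P.-integrable setT (fun w => ((a *: (C w - x)) ord0 j)%:E).
  move=> j.
  have -> : (fun w => ((a *: (C w - x)) ord0 j)%:E) =
            (fun w => (a%:E * ((C w - x) ord0 j)%:E)%E).
    by apply: funext => w; rewrite [in LHS]mxE EFinM.
  exact: integrableZl (ID j).
split => //; split.
  move=> j.
  have -> : (fun w => ((a *: (C w - x)) ord0 j)%:E) =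
            (fun w => (a%:E * (((fun w => (C w ord0 j)%:E) \- (fun w => (x ord0 j)%:E)) w))%E).
    by apply: funext => w; rewrite /= !mxE EFinM EFinB.
  rewrite integralZl //; last exact: integrableB (HC j).1 (Icst _).
  rewrite integralB //; last exact: (HC j).1.
  rewrite (HC j).2.
  have -> : (\int[P]_w (x ord0 j)%:E = (x ord0 j)%:E)%E.
    rewrite (integral_cst P measurableT) -[RHS]mule1; congr (_ * _)%E; exact: probability_setT.
  by rewrite subee // mule0.
under eq_integral do rewrite sqnZ EFinM.
rewrite ge0_integralZl_EFin //; last 3 first.
- by move=> w _; rewrite lee_fin sqn_ge0.
- exact/measurable_realfun.measurable_EFinP/(meas_sqn ID).
- exact: sqr_ge0.
rewrite -mulrA EFinM -[(a%:E * a%:E)%E]EFinM -expr2.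
have h : (0 <= (a ^+ 2)%:E)%E by rewrite lee_fin sqr_ge0.
exact: (lee_wpmul2l h Hv).
Qed.

Unset Implicit Arguments.

Theorem lemma8
  (R : realType) (d n : nat) (hn : (0 < n)%N)
  (* Assumptions 1-3 *)
  (f : 'I_n -> 'rV[R]_d -> R) (gf : 'I_n -> 'rV[R]_d -> 'rV[R]_d)
  (Li : 'I_n -> R) (Lhat L mu : R)
  (Hgrad : forall i, is_gradient (f i) (gf i))
  (HLi : forall i, smooth_grad (Li i) (gf i))
  (HLhat : 0 < Lhat /\
     forall x y, n%:R^-1 * \sum_(i < n) sqn (gf i x - gf i y) <= Lhat ^+ 2 * sqn (x - y))
  (HL : smooth_grad L (fun x => n%:R^-1 *: \sum_(i < n) gf i x))
  (Hconv : forall i, convex_fun (f i))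
  (Hmu : 0 <= mu)
  (Hsc : strongly_convex_fun mu (fun x => n%:R^-1 * \sum_(i < n) f i x))
  (Hmin : exists xs, is_argmin (fun x => n%:R^-1 * \sum_(i < n) f i x) xs)
  (* worker compressors C_i^{D,y} in U(omega): randomness of worker i is the
     i-th of n independent draws from Py *)
  (dy : measure_display) (Ty : measurableType dy) (Py : probability Ty R)
  (Cy : 'I_n -> Ty -> 'rV[R]_d -> 'rV[R]_d) (omega : R) (Homega : 0 <= omega)
  (HCy_unb : forall i x (j : 'I_d),
     Py.-integrable setT (fun w => (Cy i w x ord0 j)%:E) /\
     (\int[Py]_w (Cy i w x ord0 j)%:E = (x ord0 j)%:E)%E)
  (HCy_var : forall i x,
     (\int[Py]_w (sqn (Cy i w x - x))%:E <= (omega * sqn x)%:E)%E)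
  (* server compressor C^P in B(alpha), drawn independently from Pp *)
  (dp : measure_display) (Tp : measurableType dp) (Pp : probability Tp R)
  (Cp : Tp -> 'rV[R]_d -> 'rV[R]_d) (alpha : R) (Halpha : 0 < alpha <= 1)
  (HCp_meas : forall x (j : 'I_d), measurable_fun setT (fun w => Cp w x ord0 j))
  (HCp : forall x,
     (\int[Pp]_w (sqn (Cp w x - x))%:E <= ((1 - alpha) * sqn x)%:E)%E)
  (* algorithm parameters *)
  (Lbar p G0 tau : R) (HLbar : 0 < Lbar) (Hp : 0 < p <= 1) (HG0 : 1 <= G0)
  (Htau : 0 < tau <= 1)
  (* iteration t and the state at iteration t *)
  (t : nat) (w z u k : 'rV[R]_d) (h : 'I_n -> 'rV[R]_d)
  (q : 'rV[R]_d) (u1 : seq Ty -> 'rV[R]_d) :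
  let F := fun x => n%:R^-1 * \sum_(i < n) f i x in
  let gF := fun x => n%:R^-1 *: \sum_(i < n) gf i x in
  let Lmax := \big[Num.max/0]_(i < n) Li i in
  let G := Gam Lbar mu p alpha tau omega G0 t in
  let G1 := Gam Lbar mu p alpha tau omega G0 t.+1 in
  let th := theta_next Lbar mu p alpha tau omega G in
  let ga := gamma_next Lbar mu p alpha tau omega G in
  let st := ga / (Lbar + G1 * mu) in
  let hbar := n%:R^-1 *: \sum_(i < n) h i in
  let y := th *: w + (1 - th) *: z in
  let g := fun s : seq Ty =>
     hbar + n%:R^-1 *: \sum_(i < n) Cy i (nth point s i) (gf i y - h i) in
  (forall s, is_argmin (fun x => dot (g s) x + (Lbar + G * mu) / (2 * ga) * sqn (x - u)
                                 + mu / 2 * sqn (x - y)) (u1 s)) ->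
  is_argmin (fun x => dot k x + (Lbar + G * mu) / (2 * ga) * sqn (x - w)
                      + mu / 2 * sqn (x - y)) q ->
  (iterE Py n (fun s =>
      \int[Pp]_wp (sqn (q + Cp wp (u1 s - q) - u1 s))%:E)
   <= ((1 - alpha / 2) * sqn (w - u)
       + 4 / alpha * st ^+ 2 * sqn (k - gF z)
       + 2 * omega / n%:R * st ^+ 2 * (n%:R^-1 * \sum_(i < n) sqn (gf i z - h i))
       + st ^+ 2 * (4 * omega * Lmax / n%:R + 8 * L / alpha) * bregman F gF z y)%:E)%E.
Proof.
move=> F gF Lmax G G1 th ga st hbar y g Hu Hq.
have [a0 a1] := andP Halpha.
have [tau0 _] := andP Htau.
have [p0 p1] := andP Hp.
have G_ge1 : 1 <= G := Gam_ge1 HLbar Hmu Hp a0 tau0 Homega HG0 t.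
have Gpos : 0 < G by apply: lt_le_trans ltr01 G_ge1.
have ga0 : 0 < ga := gamma_pos HLbar Hmu Hp a0 tau0 Homega Gpos.
have G1E : G1 = G + ga by [].
have Gmu0 : 0 <= G * mu by rewrite mulr_ge0 // ltW.
have gamu0 : 0 <= ga * mu by rewrite mulr_ge0 // ltW.
set c1 := (Lbar + G * mu) / (2 * ga).
have c1p : 0 < c1 by rewrite /c1 divr_gt0 //; lra.
have c2p : 0 <= mu / 2 by rewrite divr_ge0.
set M := 2 * c1 + 2 * (mu / 2).
have den0 : 0 < Lbar + (G + ga) * mu by rewrite mulrDl; lra.
have stM : st * M = 1.
  by rewrite /st /M /c1 G1E; field; rewrite (gt_eqF ga0) (gt_eqF den0).
set cc := 2 * c1 * st.
have cc0 : 0 <= cc <= 1.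
  have -> : cc = (Lbar + G * mu) / (Lbar + G1 * mu) by rewrite /cc /c1 /st G1E; field; rewrite (gt_eqF ga0) (gt_eqF den0).
  rewrite G1E divr_ge0 /=; last lra; last lra.
  rewrite ler_pdivrMr; last lra.
  lra.
have Eu := fun s => argmin_char c1p c2p (Hu s).
have Eq := argmin_char c1p c2p Hq.
pose xi := fun i : 'I_n => gf i y - h i.
pose Z := fun (i : 'I_n) (wv : Ty) => (- (st / n%:R)) *: (Cy i wv (xi i) - xi i).
pose V := cc *: (u - w) - st *: (gF y - k).
have nR0 : 0 < n%:R :> R by rewrite ltr0n.
have Ediff : forall s, u1 s - q = V + \sum_(i < n) Z i (nth point s i).
  move=> s.
  set S := \sum_(i < n) (Cy i (nth point s i) (xi i) - xi i).
  have gsE : g s = gF y + n%:R^-1 *: S.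
    rewrite /g /S /gF /hbar /xi sumrB sumrB scalerBr scalerBr.
    apply/rowP => j; rewrite !mxE; ring.
  have SZ : \sum_(i < n) Z i (nth point s i) = (- (st / n%:R)) *: S.
    by rewrite /S scaler_sumr.
  rewrite SZ /V.
  have E1 := Eu s; have E2 := Eq.
  rewrite gsE in E1.
  apply/rowP => j.
  have := congr1 (fun v : 'rV[R]_d => v ord0 j) E1; have := congr1 (fun v : 'rV[R]_d => v ord0 j) E2.
  rewrite !mxE /= => e2 e1.
  have lin : M * ((u1 s) ord0 j - q ord0 j) =
     2 * c1 * (u ord0 j - w ord0 j) - ((gF y) ord0 j + n%:R^-1 * S ord0 j - k ord0 j).
    rewrite /M /gF mxE; lra.
  have -> : (u1 s) ord0 j - q ord0 j = st * (M * ((u1 s) ord0 j - q ord0 j)) by rewrite mulrA stM mul1r.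
  rewrite lin /cc /gF ?mxE; field.
  by rewrite (gt_eqF nR0).
pose Zn := fun (kk : nat) (wv : Ty) => if (insub kk : option 'I_n) is Some i then Z i wv else 0.
pose bn := fun kk : nat => if (insub kk : option 'I_n) is Some i then (- (st / n%:R)) ^+ 2 * omega * sqn (xi i) else 0.
have Icst : forall c : R, Py.-integrable setT (fun _ => c%:E).
  by move=> c; exact: (finite_measure_integrable_cst Py c measurableT).
have HZ : forall kk, (forall j, Py.-integrable setT (fun wv => (Zn kk wv ord0 j)%:E)) /\
   (forall j, (\int[Py]_wv (Zn kk wv ord0 j)%:E = 0)%E) /\
   (\int[Py]_wv (sqn (Zn kk wv))%:E <= (bn kk)%:E)%E.
  move=> kk; rewrite /Zn /bn; case: (insub kk) => [i|].
    apply: centered; last exact: HCy_var.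
    by move=> j; exact: HCy_unb.
  have z0 : forall j : 'I_d, (0 : 'rV[R]_d) ord0 j = 0 by move=> j; rewrite mxE.
  split; first by move=> j; rewrite z0; exact: Icst.
  split; first by move=> j; rewrite z0 integral0.
  by rewrite /sqn dot0l integral0.
have Hvar := @iterE_var R dy Ty Py d (1 - alpha) ltac:(lra) n Zn bn
   (fun kk => (HZ kk).1) (fun kk => (HZ kk).2.1) (fun kk => (HZ kk).2.2) V.
have sumZ : forall s, \sum_(i < n) Zn i (nth point s i) = \sum_(i < n) Z i (nth point s i).
  by move=> s; apply: eq_bigr => i _; rewrite /Zn valK.
have sumb : \sum_(i < n) bn i = (st / n%:R) ^+ 2 * omega * \sum_(i < n) sqn (xi i).
  rewrite mulr_sumr; apply: eq_bigr => i _; by rewrite /bn valK sqrrN.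
apply: (@le_trans _ _ (iterE Py n (fun s => ((1 - alpha) * sqn (u1 s - q))%:E))).
  apply: iterE_le.
    by move=> s; apply: integral_ge0 => wp _; rewrite lee_fin sqn_ge0.
  move=> s.
  have -> : (fun wp => (sqn (q + Cp wp (u1 s - q) - u1 s))%:E) =
            (fun wp => (sqn (Cp wp (u1 s - q) - (u1 s - q)))%:E).
    apply: funext => wp; congr (sqn _)%:E.
    by apply/rowP => j; rewrite !mxE; ring.
  exact: HCp.
have -> : (fun s => ((1 - alpha) * sqn (u1 s - q))%:E) =
          (fun s => ((1 - alpha) * sqn (V + \sum_(i < n) Zn i (nth point s i)))%:E).
  by apply: funext => s; rewrite sumZ Ediff.
apply: le_trans Hvar _.
rewrite lee_fin sumb.
have HcF : convex_fun F := sconvex_convex Hmu Hsc.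
have HlF : lined F gF := lined_avg (fun i => lined_grad (Hgrad i)).
have Hal : 0 < alpha / 2 by rewrite divr_gt0.
have HSV : sqn V <= (1 + alpha / 2) * cc ^+ 2 * sqn (w - u)
                    + (1 + (alpha / 2)^-1) * st ^+ 2 * sqn (gF y - k).
  have := sqn_young (cc *: (u - w)) (- (st *: (gF y - k))) Hal.
  rewrite sqnZ sqnN sqnZ (sqn_sym u w) -/V; lra.
have HT : sqn (gF y - k) <= 2 * sqn (k - gF z) + 2 * sqn (gF y - gF z).
  have := sqn_young (gF y - gF z) (gF z - k) ltr01.
  rewrite addrA subrK invr1 (sqn_sym (gF z) k); lra.
have HTg : sqn (gF y - gF z) <= 2 * L * bregman F gF z y.
  rewrite sqn_sym; exact: (cocoercive y z HcF HlF HL).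
pose Di := fun i : 'I_n => f i z - f i y - dot (gf i y) (z - y).
have HDi : forall i, sqn (xi i) <= 2 * sqn (gf i z - h i) + 4 * Lmax * Di i.
  move=> i.
  have Hli := lined_grad (Hgrad i).
  have := sqn_young (gf i y - gf i z) (gf i z - h i) ltr01.
  rewrite addrA subrK invr1 -/(xi i) => H1.
  have H2 := cocoercive y z (Hconv i) Hli (HLi i).
  rewrite -(sqn_sym (gf i y)) in H2.
  have H3 := first_order y z (Hconv i) Hli (HLi i).
  have H4 : Li i <= Lmax by rewrite /Lmax (bigD1 i) //= le_max lexx.
  have H5 : Li i * Di i <= Lmax * Di i by apply: ler_wpM2r.
  rewrite /Di in H5 *; lra.
have HSD : \sum_(i < n) Di i = n%:R * bregman F gF z y.
  rewrite /bregman /F /gF /Di dotZl dot_suml !sumrB.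
  field; by rewrite (gt_eqF nR0).
have HSx : \sum_(i < n) sqn (xi i) <= 2 * \sum_(i < n) sqn (gf i z - h i)
             + 4 * Lmax * (n%:R * bregman F gF z y).
  rewrite -HSD !mulr_sumr -big_split /=; apply: ler_sum => i _; exact: HDi.
apply: (final_ineq (T := sqn (gF y - k)) (Tg := sqn (gF y - gF z)) _ cc0 Homega nR0 _ _ _ _ HSV HT HTg HSx).
- by rewrite a0 a1.
- exact: sqn_ge0.
- exact: sqn_ge0.
- by apply: sumr_ge0 => i _; exact: sqn_ge0.
- exact: sqn_ge0.
Qed.
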